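(* For every $\lambda$-term $A$ there is a clean $\lambda$-term $B$ such that $A\twoheadrightarrow_{\alpha'}B$.
   Context: $\lambda$-terms over an infinite variable set $\mathcal V$: $\mathcal M ::= \mathcal V \mid (\lambda\mathcal V.\mathcal M)\mid(\mathcal M\mathcal M)$. $FV(C)$ is the set of variables with a free occurrence in $C$ (occurrences inside the body of $\lambda v.\cdot$, or the $v$ of $\lambda v$, are bound); $BV(C)$ is the set of $v$ such that $\lambda v$ occurs in $C$; $FV(vA)=\{v\}\cup FV(A)$. A term $A$ is clean iff $BV(A)\cap FV(A)=\emptyset$ and for every variable $v$, $\lambda v$ occurs at most once in $A$. Grafting $A\{v:=B\}$: $v\{v:=B\}=B$; $v'\{v:=B\}=v'$ if $v'\neq v$; $(AC)\{v:=B\}=A\{v:=B\}C\{v:=B\}$; $(\lambda v.A)\{v:=B\}=\lambda v.A$; $(\lambda v'.A)\{v:=B\}=\lambda v'.A\{v:=B\}$ if $v\neq v'$. $\to_{\alpha'}$ is the least relation closed under $A\mapsto AC$, $A\mapsto CA$, $A\mapsto\lambda u.A$ (compatible) containing $\lambda v.A\to_{\alpha'}\lambda v'.A\{v:=v'\}$ whenever $v'\notin FV(vA)$ and $v,v'\notin BV(A)$; $\twoheadrightarrow_{\alpha'}$ is its reflexive transitive closure. *)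

(* Defs.v *)
From Stdlib Require Import Arith List Relations.
Import ListNotations.

Definition var := nat.

Inductive term : Type :=
| Var : var -> term
| Lam : var -> term -> term
| App : term -> term -> term.

Fixpoint FV (t : term) (x : var) : Prop :=
  match t with
  | Var y => x = y
  | Lam y a => x <> y /\ FV a x
  | App a b => FV a x \/ FV b x
  end.

Fixpoint BV (t : term) (x : var) : Prop :=
  match t with
  | Var _ => False
  | Lam y a => x = y \/ BV a x
  | App a b => BV a x \/ BV b x
  end.

Fixpoint binder_count (t : term) (x : var) : nat :=
  match t with
  | Var _ => 0
  | Lam y a => (if Nat.eqb x y then 1 else 0) + binder_count a x
  | App a b => binder_count a x + binder_count b x
  end.

Definition clean (A : term) : Prop :=
  (forall v, ~ (BV A v /\ FV A v)) /\ (forall v, binder_count A v <= 1).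

Fixpoint graft (A : term) (v : var) (B : term) : term :=
  match A with
  | Var y => if Nat.eqb y v then B else Var y
  | App a c => App (graft a v B) (graft c v B)
  | Lam y a => if Nat.eqb y v then Lam y a else Lam y (graft a v B)
  end.

Inductive alpha1 : term -> term -> Prop :=
| alpha1_base : forall v v' A,
    ~ (v' = v \/ FV A v') -> ~ BV A v -> ~ BV A v' ->
    alpha1 (Lam v A) (Lam v' (graft A v (Var v')))
| alpha1_appl : forall A A' C, alpha1 A A' -> alpha1 (App A C) (App A' C)
| alpha1_appr : forall A A' C, alpha1 A A' -> alpha1 (App C A) (App C A')
| alpha1_lam : forall u A A', alpha1 A A' -> alpha1 (Lam u A) (Lam u A').

Definition alpha_star : term -> term -> Prop := clos_refl_trans term alpha1.

(* Main.v *)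
Require Import Defs.
From Stdlib Require Import Arith List Relations Lia.

Lemma star_app_l : forall a a' c, alpha_star a a' -> alpha_star (App a c) (App a' c).
Proof.
  intros a a' c H; induction H.
  - apply rt_step; constructor; auto.
  - apply rt_refl.
  - eapply rt_trans; eauto.
Qed.

Lemma star_app_r : forall a a' c, alpha_star a a' -> alpha_star (App c a) (App c a').
Proof.
  intros a a' c H; induction H.
  - apply rt_step; constructor; auto.
  - apply rt_refl.
  - eapply rt_trans; eauto.
Qed.

Lemma star_lam : forall a a' u, alpha_star a a' -> alpha_star (Lam u a) (Lam u a').
Proof.
  intros a a' u H; induction H.
  - apply rt_step; constructor; auto.
  - apply rt_refl.
  - eapply rt_trans; eauto.
Qed.

Lemma bc_BV : forall t x, binder_count t x <> 0 -> BV t x.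
Proof.
  induction t; simpl; intros x H.
  - lia.
  - destruct (Nat.eqb_spec x v); auto.
  - destruct (Nat.eq_dec (binder_count t1 x) 0); [right|left]; auto.
    apply IHt2; lia.
Qed.

Lemma graft_BV : forall a v y x, BV (graft a v (Var y)) x <-> BV a x.
Proof.
  induction a; simpl; intros.
  - destruct (Nat.eqb v v0); simpl; tauto.
  - destruct (Nat.eqb v v0); simpl; [tauto|]. rewrite IHa; tauto.
  - rewrite IHa1, IHa2; tauto.
Qed.

Lemma graft_bc : forall a v y x, binder_count (graft a v (Var y)) x = binder_count a x.
Proof.
  induction a; simpl; intros.
  - destruct (Nat.eqb v v0); simpl; auto.
  - destruct (Nat.eqb v v0); simpl; auto.
  - rewrite IHa1, IHa2; auto.
Qed.

Lemma graft_FV : forall a v y x, ~ BV a y -> ~ BV a v ->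
  (FV (graft a v (Var y)) x <-> (FV a x /\ x <> v) \/ (x = y /\ FV a v)).
Proof.
  induction a; simpl; intros v0 y x Hy Hv.
  - destruct (Nat.eqb_spec v v0); simpl; subst.
    + split; intros H; [right; auto| destruct H as [[? ?]|[? ?]]; subst; congruence].
    + split; intros H; [left; subst; auto| destruct H as [[? ?]|[? ?]]; subst; congruence].
  - destruct (Nat.eqb_spec v v0); [exfalso; apply Hv; auto|]. simpl.
    rewrite IHa by tauto.
    split; intros H.
    + destruct H as [H1 [[H2 H3]|[H2 H3]]]; [left; tauto | right; subst; tauto].
    + destruct H as [[[H1 H2] H3]|[H1 [H2 H3]]]; split; auto.
      subst; intro; apply Hy; auto.
  - rewrite IHa1, IHa2 by tauto. tauto.
Qed.

Lemma main : forall t n, (forall x, (FV t x \/ BV t x) -> x < n) ->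
  exists t' m, n <= m /\ alpha_star t t' /\ (forall x, FV t' x <-> FV t x)
    /\ (forall x, BV t' x -> n <= x < m) /\ (forall x, binder_count t' x <= 1).
Proof.
  induction t; intros n Hn.
  - exists (Var v), n; repeat split; simpl in *; try apply rt_refl; try tauto; try lia.
  - destruct (IHt n) as [a' [m1 [Hm1 [Hs [Hfv [Hbv Hbc]]]]]].
    { intros x Hx; apply Hn; simpl; destruct Hx as [Hx|Hx].
      destruct (Nat.eq_dec x v); [right; left; auto| left; auto]. right; right; auto. }
    assert (Hv : v < n) by (apply Hn; simpl; right; left; auto).
    assert (Hm1a : ~ FV a' m1).
    { rewrite Hfv; intro H. assert (m1 < n) by (apply Hn; simpl; destruct (Nat.eq_dec m1 v); [right; left; auto| left; auto]). lia. }
    assert (Hbv1 : ~ BV a' v) by (intro H; apply Hbv in H; lia).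
    assert (Hbv2 : ~ BV a' m1) by (intro H; apply Hbv in H; lia).
    exists (Lam m1 (graft a' v (Var m1))), (S m1).
    split; [lia|]. split.
    { eapply rt_trans; [apply star_lam; eauto|]. apply rt_step; constructor; auto.
      intros [H|H]; [lia|auto]. }
    split; [|split].
    + intros x; simpl; rewrite graft_FV by auto; split.
      * intros [H1 [[H2 H3]|[H2 H3]]]; [|congruence]. split; auto. apply Hfv; auto.
      * intros [H1 H2]. split; [intro; subst; apply Hm1a; apply Hfv; auto|].
        left; split; auto. apply Hfv; auto.
    + simpl; intros x [H|H]; [lia|]. rewrite graft_BV in H. apply Hbv in H; lia.
    + intros x; simpl. rewrite graft_bc. destruct (Nat.eqb_spec x m1); simpl; auto.
      subst. destruct (Nat.eq_dec (binder_count a' m1) 0); [lia|].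
      exfalso; apply Hbv2; apply bc_BV; auto.
  - destruct (IHt1 n) as [a' [m1 [Hm1 [Hs [Hfv [Hbv Hbc]]]]]].
    { intros x Hx; apply Hn; simpl; tauto. }
    destruct (IHt2 m1) as [b' [m2 [Hm2 [Hs2 [Hfv2 [Hbv2 Hbc2]]]]]].
    { intros x Hx; assert (x < n) by (apply Hn; simpl; tauto); lia. }
    exists (App a' b'), m2.
    split; [lia|]. split.
    { eapply rt_trans; [apply star_app_l; eauto| apply star_app_r; eauto]. }
    split; [|split].
    + intros x; simpl; rewrite Hfv, Hfv2; tauto.
    + simpl; intros x [H|H]; [apply Hbv in H|apply Hbv2 in H]; lia.
    + intros x; simpl.
      destruct (Nat.eq_dec (binder_count a' x) 0); [specialize (Hbc2 x); lia|].
      destruct (Nat.eq_dec (binder_count b' x) 0); [specialize (Hbc x); lia|].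
      apply bc_BV, Hbv in n0. apply bc_BV, Hbv2 in n1. lia.
Qed.

Fixpoint maxvar (t : term) : nat :=
  match t with
  | Var y => y
  | Lam y a => max y (maxvar a)
  | App a b => max (maxvar a) (maxvar b)
  end.

Lemma maxvar_spec : forall t x, (FV t x \/ BV t x) -> x <= maxvar t.
Proof.
  induction t; simpl; intros x H.
  - destruct H as [H|H]; [lia|contradiction].
  - assert (x = v \/ FV t x \/ BV t x) by tauto.
    destruct H0 as [H0|H0]; [lia|]. apply IHt in H0; lia.
  - destruct H as [[H|H]|[H|H]];
      [assert (x <= maxvar t1) by auto|assert (x <= maxvar t2) by auto
      |assert (x <= maxvar t1) by auto|assert (x <= maxvar t2) by auto]; lia.
Qed.

Theorem lemma5p5 : forall A : term, exists B : term, clean B /\ alpha_star A B.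
Proof.
  intros A.
  destruct (main A (S (maxvar A))) as [B [m [Hm [Hs [Hfv [Hbv Hbc]]]]]].
  { intros x Hx; apply maxvar_spec in Hx; lia. }
  exists B; split; auto. split; auto.
  intros v [H1 H2]. apply Hbv in H1. apply Hfv in H2.
  assert (v <= maxvar A) by (apply maxvar_spec; auto). lia.
Qed.
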